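(* Let $X,X',Y,Y'$ be integer-valued random variables such that $X'$ and $Y'$ take values in $\{0,1\}$, $X\succeq Y$, and for all $x\in\mathbb{Z}$, $(X'\mid X=x)\succeq(Y'\mid Y=x)$. Then $X+X'\succeq Y+Y'$.
   Context: For real random variables, $X\succeq Y$ ($X$ stochastically dominates $Y$) means $\Pr[X\ge x]\ge\Pr[Y\ge x]$ for all real $x$; $(X'\mid X=x)$ denotes the conditional distribution of $X'$ given $X=x$. *)

(* Defs.v *)
From HB Require Import structures.
From mathcomp Require Import all_boot all_order all_algebra.
From mathcomp Require Import all_classical all_reals all_analysis.
Set Implicit Arguments. Unset Strict Implicit. Unset Printing Implicit Defensive.
Import Order.TTheory GRing.Theory Num.Theory.
Local Open Scope classical_set_scope.
Local Open Scope ring_scope.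

Definition stoch_dom d1 d2 (T1 : measurableType d1) (T2 : measurableType d2)
  (R : realType) (P : probability T1 R) (X : T1 -> R)
  (Q : probability T2 R) (Y : T2 -> R) : Prop :=
  forall x : R, (Q [set w | (x <= Y w)%R] <= P [set w | (x <= X w)%R])%E.

(* elementary conditional probability P(A | B) = P(A & B) / P(B)
   (only used when P(B) > 0) *)
Definition cprob d (T : measurableType d) (R : realType) (P : probability T R)
  (A B : set T) : R := fine (P (A `&` B)) / fine (P B).

Definition cond_stoch_dom d1 d2 (T1 : measurableType d1) (T2 : measurableType d2)
  (R : realType) (P : probability T1 R) (X' : T1 -> R) (B : set T1)
  (Q : probability T2 R) (Y' : T2 -> R) (C : set T2) : Prop :=
  forall x : R, cprob Q [set w | x <= Y' w] C <= cprob P [set w | x <= X' w] B.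

(* Main.v *)
Require Import Defs.
From HB Require Import structures.
From mathcomp Require Import all_boot all_order all_algebra.
From mathcomp Require Import all_classical all_reals all_analysis.
From mathcomp Require Import zify ring lra.
Import Order.TTheory GRing.Theory Num.Theory.
Local Open Scope classical_set_scope.
Local Open Scope ring_scope.

Lemma real_key (R : realFieldType) (a a' b b' c c' : R) :
  a' <= a -> a' + b' <= a + b -> 0 <= c <= b -> 0 <= c' <= b' ->
  (0 < b -> 0 < b' -> c' / b' <= c / b) -> a' + c' <= a + c.
Proof.
move=> h1 h2 /andP[c0 cb] /andP[c'0 c'b] hq.
have [b0|bpos] := eqVneq b 0.
  have -> : c = 0 by apply/eqP; rewrite eq_le c0 -b0 cb.
  lra.
have [b'0|b'pos] := eqVneq b' 0.
  have -> : c' = 0 by apply/eqP; rewrite eq_le c'0 -b'0 c'b.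
  lra.
have bp : 0 < b by rewrite lt_def bpos (le_trans c0 cb).
have b'p : 0 < b' by rewrite lt_def b'pos (le_trans c'0 c'b).
have := hq bp b'p.
set p := c / b; set q := c' / b'.
have cE : c = p * b by rewrite /p divfK.
have c'E : c' = q * b' by rewrite /q divfK.
have p1 : p <= 1 by rewrite /p ler_pdivrMr // mul1r.
have q0 : 0 <= q by rewrite /q; apply: divr_ge0 => //; exact: ltW.
move=> qp.
have H1 : 0 <= (1 - p) * (a - a') by apply: mulr_ge0; lra.
have H2 : 0 <= p * ((a + b) - (a' + b')) by apply: mulr_ge0; lra.
have H3 : 0 <= (p - q) * b' by apply: mulr_ge0; lra.
rewrite cE c'E; nra.
Qed.

Lemma key1 (R : realType) (x y e : R) : y \is a Num.int -> (e = 0 \/ e = 1) ->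
  (x <= y + e) <-> (x <= y) \/ (e = 1 /\ y = (Num.ceil x - 1)%:~R).
Proof.
move=> /ceilK hy he.
set k := Num.ceil y in hy; rewrite -hy.
have E1 : ((k%:~R : R) + 1) = (k + 1)%:~R by rewrite intrD.
case: he => ->.
  rewrite addr0; split; first by left.
  by case=> // -[] /eqP; rewrite eq_sym oner_eq0.
rewrite E1; split.
  move=> h; have h1 : Num.ceil x <= k + 1 by rewrite ceil_le_int.
  have [h'|h'] := leP (Num.ceil x) k; first by left; rewrite -ceil_le_int.
  by right; split=> //; congr intr; lia.
case=> [h|[_ /eqP]]; last by rewrite eqr_int => /eqP ->; rewrite subrK; exact: ceil_ge.
by apply: le_trans h _; rewrite ler_int; lia.
Qed.

Lemma key2 (R : realType) (x y : R) : y \is a Num.int ->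
  (x - 1 <= y) <-> (x <= y) \/ y = (Num.ceil x - 1)%:~R.
Proof.
move=> hy; rewrite lerBlDr; rewrite (@key1 _ x _ _ hy (or_intror erefl)).
by split; case=> [h|h]; [left|right; case: h|left|right; split].
Qed.

Section Dec.
Variables (d : measure_display) (T : measurableType d) (R : realType) (P : probability T R).
Variables (X X' : {RV P >-> R}).
Hypothesis hXint : forall w, X w \is a Num.int.
Hypothesis h01 : forall w, X' w = 0 \/ X' w = 1.

Lemma mS (x : R) : measurable [set w | x <= X w].
Proof.
have -> : [set w | x <= X w] = X @^-1` `[x, +oo[%classic.
  by apply/seteqP; split => w /=; rewrite in_itv /= andbT.
exact: measurable_funPTI (measurable_itv _).
Qed.

Lemma mS' (x : R) : measurable [set w | x <= X' w].
Proof.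
have -> : [set w | x <= X' w] = X' @^-1` `[x, +oo[%classic.
  by apply/seteqP; split => w /=; rewrite in_itv /= andbT.
exact: measurable_funPTI (measurable_itv _).
Qed.

Lemma mE (y : R) : measurable [set w | X w = y].
Proof. exact: measurable_funPTI (measurable_set1 _). Qed.

Lemma dsetA (x : R) : [set w | x <= X w + X' w] =
  [set w | x <= X w] `|` ([set w | 1 <= X' w] `&` [set w | X w = (Num.ceil x - 1)%:~R]).
Proof.
apply/seteqP; split => w /=.
  rewrite (@key1 _ x _ _ (hXint w) (h01 w)) => -[h|[h1 h2]]; [by left|right; split=> //].
  by rewrite h1.
move=> H; apply/(@key1 _ x _ _ (hXint w) (h01 w)); case: H => [h|[h1 h2]]; [by left|right; split=> //].
by case: (h01 w) h1 => -> //; rewrite ler10.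
Qed.

Lemma dsetB (x : R) : [set w | x - 1 <= X w] =
  [set w | x <= X w] `|` [set w | X w = (Num.ceil x - 1)%:~R].
Proof.
by apply/seteqP; split => w /=; rewrite (@key2 _ x _ (hXint w)).
Qed.

Lemma dsetD (x : R) : [set w | x <= X w] `&` [set w | X w = (Num.ceil x - 1)%:~R] = set0.
Proof.
apply/seteqP; split => w //= [h1 h2].
by move: (ceilB1_lt x); rewrite -h2 ltNge h1.
Qed.
End Dec.

Lemma fP d (T : measurableType d) (R : realType) (P : probability T R) (A : set T) :
  measurable A -> P A = (fine (P A))%:E.
Proof. by move=> mA; rewrite fineK // (fin_num_measure P A mA). Qed.

Lemma side d (T : measurableType d) (R : realType) (P : probability T R)
  (X X' : {RV P >-> R}) (hXint : forall w, X w \is a Num.int)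
  (h01 : forall w, X' w = 0 \/ X' w = 1) (x : R) :
  let S := [set w | x <= X w] in
  let E := [set w | X w = (Num.ceil x - 1)%:~R] in
  let F := [set w | 1 <= X' w] in
  [/\ P [set w | x <= X w + X' w] = (fine (P S) + fine (P (F `&` E)))%:E,
      P [set w | x - 1 <= X w] = (fine (P S) + fine (P E))%:E,
      P S = (fine (P S))%:E, P E = (fine (P E))%:E &
      0 <= fine (P (F `&` E)) <= fine (P E)].
Proof.
move=> S E F.
have mS0 : measurable S by exact: mS.
have mE0 : measurable E by exact: mE.
have mF0 : measurable F by exact: mS'.
have mFE : measurable (F `&` E) by exact: measurableI.
split.
- rewrite (@dsetA _ _ _ P X X' hXint h01 x : [set w | x <= X w + X' w] = S `|` (F `&` E)) measureU //; last first.
    by rewrite setICA (dsetD _ _ _ P X x) setI0.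
  by rewrite EFinD -!fP.
- by rewrite (dsetB _ _ _ P X hXint x) measureU ?(dsetD _ _ _ P X x) // EFinD -!fP.
- exact: fP.
- exact: fP.
apply/andP; split; first by apply: fine_ge0; exact: measure_ge0.
by rewrite -lee_fin -!fP //; exact: measureIr.
Qed.

Theorem lemma3p7 (R : realType)
  (d1 : measure_display) (T1 : measurableType d1) (P : probability T1 R)
  (d2 : measure_display) (T2 : measurableType d2) (Q : probability T2 R)
  (X X' : {RV P >-> R}) (Y Y' : {RV Q >-> R})
  (hXint : forall w, X w \is a Num.int)
  (hYint : forall w, Y w \is a Num.int)
  (hX'01 : forall w, X' w = 0 \/ X' w = 1)
  (hY'01 : forall w, Y' w = 0 \/ Y' w = 1)
  (hdom : stoch_dom P X Q Y)
  (hcond : forall x : int,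
     (0 < P [set w | X w = x%:~R])%E -> (0 < Q [set w | Y w = x%:~R])%E ->
     cond_stoch_dom P X' [set w | X w = x%:~R] Q Y' [set w | Y w = x%:~R]) :
  stoch_dom P (fun w => X w + X' w) Q (fun w => Y w + Y' w).
Proof.
move=> x.
have [PA PB PS PE Pc] := side _ _ _ P X X' hXint hX'01 x.
have [QA QB QS QE Qc] := side _ _ _ Q Y Y' hYint hY'01 x.
rewrite PA QA lee_fin.
apply: real_key Pc Qc _.
- by have := hdom x; rewrite PS QS lee_fin.
- by have := hdom (x - 1); rewrite PB QB lee_fin.
move=> bp b'p.
have := hcond (Num.ceil x - 1); rewrite PE QE !lte_fin => /(_ bp b'p 1).
by rewrite /cprob.
Qed.
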